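(* Let $n$ be a positive integer and $v$ an odd positive integer, let $q=v^{1/n}$, and assume $q\ge 3$. Put $m=\left\lfloor\frac{q-1}{2}\right\rfloor$. Then there exists a $(K,F,Z,S)$ placement delivery array with $K=F=q^n=v$, $Z=q^n-(2m)^n$, and $S=m^nq^n$; consequently there is a $v$-division $(v,M,N)$ coded caching scheme with memory ratio $\frac{M}{N}=1-\frac{2^nm^n}{q^n}$, subpacketization $v$, and transmission load $R=m^n$.
   Context: A $(K,F,Z,S)$ placement delivery array (PDA) is an $F\times K$ array $\mathbf{P}=(p_{j,k})$ with entries from $\{*\}\cup\{1,\dots,S\}$ such that: (C1) each column contains exactly $Z$ stars; (C2) each integer of $\{1,\dots,S\}$ occurs at least once; (C3) for any two distinct entries $p_{j_1,k_1}=p_{j_2,k_2}=s$ (an integer) we have $j_1\neq j_2$, $k_1\neq k_2$, and $p_{j_1,k_2}=p_{j_2,k_1}=*$. A $(K,M,N)$ coded caching system consists of a server storing $N$ equal-size files and $K$ users each with a cache of size $M$ files, connected by an error-free shared broadcast link. An $F$-division scheme splits each file into $F$ equal-size packets; in the placement phase packets are stored in user caches without knowledge of future demands; in the delivery phase each user requests one file and the server broadcasts coded messages (XORs of packets) so that every user can decode its requested file. The transmission load $R$ is the worst case over all demand vectors of the total broadcast size normalized by the file size; $M/N$ is the memory ratio. *)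

(* Defs.v *)
From HB Require Import structures.
From mathcomp Require Import all_boot all_order all_algebra.
From mathcomp Require Import reals.
Set Implicit Arguments.
Unset Strict Implicit.
Unset Printing Implicit Defensive.
Import Order.TTheory GRing.Theory Num.Theory.

(* A (K,F,Z,S) placement delivery array: an F x K array with entries in
   {*} U {1..S}; [None] encodes the star and [Some s] (s : 'I_S) encodes
   the integer s+1. *)
Definition is_PDA (K F Z S : nat) (P : 'M[option 'I_S]_(F, K)) : Prop :=
  (forall k : 'I_K, #|[set j : 'I_F | P j k == None]| = Z) /\
  (forall s : 'I_S, exists (j : 'I_F) (k : 'I_K), P j k = Some s) /\
  (forall (j1 j2 : 'I_F) (k1 k2 : 'I_K) (s : 'I_S),
     (j1, k1) <> (j2, k2) -> P j1 k1 = Some s -> P j2 k2 = Some s ->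
     [/\ j1 <> j2, k1 <> k2, P j1 k2 = None & P j2 k1 = None]).

(* An F-division coded caching scheme for K users and N files.
   A packet is indexed by (file, packet index).  Placement: user k stores
   (uncoded) the set of packets [cache k], chosen independently of demands.
   Delivery: for each demand vector d, the server broadcasts a list of
   messages, each being the XOR of a set of packets (each message has the
   size of one packet). *)
Record caching_scheme (K N F : nat) := CachingScheme {
  cache : 'I_K -> {set 'I_N * 'I_F};
  deliver : {ffun 'I_K -> 'I_N} -> seq {set 'I_N * 'I_F}
}.

(* value of the XOR of the packets in A, for file contents W
   (packet contents modelled bitwise) *)
Definition xor_msg (N F : nat) (W : 'I_N * 'I_F -> bool)
  (A : {set 'I_N * 'I_F}) : bool :=
  \big[addb/false]_(p in A) W p.

(* Decodability: for every demand d, every user k, the cache content and the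
   broadcast messages determine all packets of the requested file d k. *)
Definition decodable (K N F : nat) (sch : caching_scheme K N F) : Prop :=
  forall (d : {ffun 'I_K -> 'I_N}) (k : 'I_K) (W W' : 'I_N * 'I_F -> bool),
    (forall p, p \in cache sch k -> W p = W' p) ->
    (forall A, A \in deliver sch d -> xor_msg W A = xor_msg W' A) ->
    forall j : 'I_F, W (d k, j) = W' (d k, j).

(* The cache of each user holds at most M files, i.e. M*F packets, where
   M = memratio * N. *)
Definition respects_memory_ratio (R : numDomainType) (K N F : nat)
  (sch : caching_scheme K N F) (memratio : R) : Prop :=
  forall k : 'I_K, (#|cache sch k|%:R <= memratio * N%:R * F%:R)%R.

Definition load (R : fieldType) (K N F : nat) (sch : caching_scheme K N F) : R :=
  ((\max_(d : {ffun 'I_K -> 'I_N}) size (deliver sch d))%:R / F%:R)%R.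

(* Main.v *)
Require Import Defs.
From HB Require Import structures.
From mathcomp Require Import all_boot all_order all_algebra reals.
From mathcomp Require Import zify ring lra.
Import Order.TTheory GRing.Theory Num.Theory.

Lemma sum_lt k w (g : 'I_k -> nat) : (forall i, g i < w) ->
  \sum_(i < k) g i * w ^ i < w ^ k.
Proof.
elim: k g => [|k IH] g hg; first by rewrite big_ord0.
rewrite big_ord_recl /= expn0 muln1.
have -> : \sum_(i < k) g (lift ord0 i) * w ^ bump 0 i =
          w * \sum_(i < k) g (lift ord0 i) * w ^ i.
  rewrite big_distrr /=; apply: eq_bigr => i _.
  by rewrite /bump /= add1n expnS mulnCA.
have := IH (fun i => g (lift ord0 i)) (fun i => hg _).
have := hg ord0.
set s := \sum_(i < k) _.
move=> h1 h2; rewrite expnS.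
have : w * s.+1 <= w * w ^ k by rewrite leq_mul2l h2 orbT.
lia.
Qed.

Lemma digits_eq k w (g h : 'I_k -> nat) : (forall i, g i < w) -> (forall i, h i < w) ->
  \sum_(i < k) g i * w ^ i = \sum_(i < k) h i * w ^ i -> forall i, g i = h i.
Proof.
elim: k g h => [|k IH] g h hg hh; first by move=> _ [].
rewrite !big_ord_recl /= !expn0 !muln1.
have E : forall f : 'I_k.+1 -> nat, \sum_(i < k) f (lift ord0 i) * w ^ bump 0 i =
          (\sum_(i < k) f (lift ord0 i) * w ^ i) * w.
  move=> f; rewrite big_distrl /=; apply: eq_bigr => i _.
  by rewrite /bump /= add1n expnS mulnCA mulnC.
rewrite !E => heq.
have w0 : 0 < w by apply: leq_ltn_trans (hg ord0).
have h0 : g ord0 = h ord0.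
  have := congr1 (modn^~ w) heq.
  by rewrite (addnC (g ord0)) (addnC (h ord0)) !modnMDl !modn_small.
move: heq; rewrite h0 => /addnI heq.
have heq' := congr1 (divn^~ w) heq; rewrite /= !mulnK // in heq'.
have IHa := IH _ _ (fun i => hg _) (fun i => hh _) heq'.
move=> i; case: (unliftP ord0 i) => [j ->|->] //; exact: IHa.

Qed.

Section Constr.
Variables (n m v : nat).
Hypothesis vpos : 0 < v.
Hypothesis hu : (2 * m + 1) ^ n <= v.

Definition w := 2 * m + 1.
Definition Et := {ffun 'I_n -> 'I_m}.
Definition Sg := {ffun 'I_n -> bool}.
Definition Tt := ('I_v * Et * Sg)%type.

Definition fd (e : Et) i := (e i).+1.
Lemma fd_le e i : 0 < fd e i <= m.
Proof. by rewrite /fd ltn_ord. Qed.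

Definition aa (e : Et) (s : Sg) := \sum_(i < n) (if s i then 0 else fd e i) * w ^ i.
Definition bb (e : Et) (s : Sg) := \sum_(i < n) (if s i then fd e i else 0) * w ^ i.
Definition MM := \sum_(i < n) m * w ^ i.
Definition xdig (e : Et) (s t : Sg) i :=
  if t i then (if s i then m + fd e i else m) else (if s i then m else m - fd e i).
Definition XX e s t := \sum_(i < n) xdig e s t i * w ^ i.

Lemma cross_id e s t : bb e t + MM = aa e s + XX e s t.
Proof.
rewrite /bb /MM /aa /XX -!big_split; apply: eq_bigr => i _ /=.
rewrite -!mulnDl; congr (_ * _); rewrite /xdig.
have := fd_le e i; case: (t i); case: (s i) => /=; lia.
Qed.

Lemma dmod (g h : 'I_n -> nat) : (forall i, g i < w) -> (forall i, h i < w) ->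
  \sum_(i < n) g i * w ^ i = \sum_(i < n) h i * w ^ i %[mod v] -> forall i, g i = h i.
Proof.
move=> hg hh.
have hu' : w ^ n <= v := hu.
have l1 := leq_trans (@sum_lt _ _ g hg) hu'.
have l2 := leq_trans (@sum_lt _ _ h hh) hu'.
rewrite (modn_small l1) (modn_small l2).
exact: digits_eq.
Qed.

Lemma xdig_lt e s t i : xdig e s t i < w.
Proof. rewrite /xdig /w; have := fd_le e i; case: (t i); case: (s i); lia. Qed.

Definition rowv (t : Tt) := (t.1.1 + aa t.1.2 t.2) %% v.
Definition colv (t : Tt) := (t.1.1 + bb t.1.2 t.2) %% v.
Definition rowo (t : Tt) : 'I_v := Ordinal (ltn_pmod (t.1.1 + aa t.1.2 t.2) vpos).
Definition colo (t : Tt) : 'I_v := Ordinal (ltn_pmod (t.1.1 + bb t.1.2 t.2) vpos).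

Lemma cross_mod x e s t :
  (x + bb e t) %% v + MM = (x + aa e s) %% v + XX e s t %[mod v].
Proof. by rewrite !modnDml -!addnA (cross_id e s t). Qed.

Lemma sg_eq (s t : Sg) : (forall i, s i = t i) -> s = t.
Proof. by move=> h; apply/ffunP. Qed.

Lemma L1 mm a b (s1 s2 : bool) : 0 < a <= mm -> 0 < b <= mm ->
  (if s1 then mm + a else mm - a) = (if s2 then mm + b else mm - b) -> s1 = s2 /\ a = b.
Proof. case: s1; case: s2 => /=; lia. Qed.

Lemma L2 a (s t : bool) : 0 < a -> (if s then 0 else a) = (if t then 0 else a) -> s = t.
Proof. case: s; case: t => /=; lia. Qed.

Lemma L2' a (s t : bool) : 0 < a -> (if s then a else 0) = (if t then a else 0) -> s = t.
Proof. case: s; case: t => /=; lia. Qed.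

Lemma L3 mm a b (s t r : bool) : 0 < a <= mm -> 0 < b <= mm -> s != t ->
  (if t then (if s then mm + a else mm) else (if s then mm else mm - a)) =
  (if r then mm + b else mm - b) -> False.
Proof. case: s; case: t; case: r => /=; lia. Qed.

Lemma xdig_ss e s i : xdig e s s i = if s i then m + fd e i else m - fd e i.
Proof. by rewrite /xdig; case: (s i). Qed.

Lemma inj_cell t1 t2 : rowo t1 = rowo t2 -> colo t1 = colo t2 -> t1 = t2.
Proof.
case: t1 => [[x1 e1] s1]; case: t2 => [[x2 e2] s2].
move=> /(congr1 val) /= hr /(congr1 val) /= hc.
have h1 := cross_mod x1 e1 s1 s1.
have h2 := cross_mod x2 e2 s2 s2.
rewrite hr hc h2 in h1.
move/eqP: h1; rewrite eqn_modDl => /eqP /dmod.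
move=> /(_ (xdig_lt _ _ _) (xdig_lt _ _ _)) hd.
have hL : forall i, s2 i = s1 i /\ fd e2 i = fd e1 i.
  by move=> i; apply: L1 (fd_le _ _) (fd_le _ _) _; rewrite -!xdig_ss.
have hs : s1 = s2 by apply: sg_eq => i; case: (hL i).
subst s2.
have he : e1 = e2.
  by apply/ffunP => i; apply: val_inj; case: (hL i) => _ [].
subst e2.
move/eqP: hr; rewrite eqn_modDr !modn_small // => /eqP hx.
by have -> : x1 = x2 by apply: val_inj.
Qed.

Lemma rows_diff x e s t : s != t -> rowo (x, e, s) != rowo (x, e, t).
Proof.
move=> hst; apply: contra hst => /eqP /(congr1 val) /= /eqP.
rewrite eqn_modDl => /eqP /dmod hd.
have hlt : forall s0 i, (if s0 i then 0 else fd e i) < w.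
  by move=> s0 i; have := fd_le e i; rewrite /w; case: (s0 i); lia.
apply/eqP/sg_eq => i; have := hd (hlt s) (hlt t) i.
by apply: L2; case/andP: (fd_le e i).
Qed.

Lemma cols_diff x e s t : s != t -> colo (x, e, s) != colo (x, e, t).
Proof.
move=> hst; apply: contra hst => /eqP /(congr1 val) /= /eqP.
rewrite eqn_modDl => /eqP /dmod hd.
have hlt : forall s0 i, (if s0 i then fd e i else 0) < w.
  by move=> s0 i; have := fd_le e i; rewrite /w; case: (s0 i); lia.
apply/eqP/sg_eq => i; have := hd (hlt s) (hlt t) i.
by apply: L2'; case/andP: (fd_le e i).
Qed.

Lemma cross_none x e s t t' : s != t ->
  rowo t' = rowo (x, e, s) -> colo t' = colo (x, e, t) -> False.
Proof.
case: t' => [[x' e'] r] hst /(congr1 val) /= hr /(congr1 val) /= hc.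
have h1 := cross_mod x e s t.
have h2 := cross_mod x' e' r r.
rewrite -hc h2 hr in h1.
move/eqP: h1; rewrite eqn_modDl => /eqP /dmod.
move=> /(_ (xdig_lt _ _ _) (xdig_lt _ _ _)) hd.
have [i hi] : exists i, s i != t i.
  apply/existsP; apply: contraR hst; rewrite negb_exists => /forallP h.
  by apply/eqP/sg_eq => i; apply/eqP; move: (h i); rewrite negbK.
have := hd i; rewrite xdig_ss /xdig; move/esym; exact: L3 (fd_le e i) (fd_le e' i) hi.
Qed.

Lemma modfix x b k : x < v -> (x + b) %% v = k -> x = (k + (v - b %% v)) %% v.
Proof.
move=> hx <-.
have hr := ltn_pmod b vpos.
rewrite modnDml {1}(divn_eq b v).
move: (b %/ v) (b %% v) hr => q r hr.
have -> : x + (q * v + r) + (v - r) = q.+1 * v + x by rewrite mulSn; lia.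
by rewrite modnMDl modn_small.
Qed.

Lemma modfix2 b k : k < v -> ((k + (v - b %% v)) %% v + b) %% v = k.
Proof.
move=> hk.
have hr := ltn_pmod b vpos.
rewrite modnDml {2}(divn_eq b v).
move: (b %/ v) (b %% v) hr => q r hr.
have -> : k + (v - r) + (q * v + r) = q.+1 * v + k by rewrite mulSn; lia.
by rewrite modnMDl modn_small.
Qed.

Lemma card_Tv : #|{: 'I_v * Et}| = m ^ n * v.
Proof. by rewrite card_prod card_ord card_ffun !card_ord mulnC. Qed.

Definition lab (t : Tt) : 'I_(m ^ n * v) := cast_ord card_Tv (enum_rank t.1).

Definition PP : 'M[option 'I_(m ^ n * v)]_(v, v) :=
  \matrix_(j, k) (if [pick t : Tt | (rowo t == j) && (colo t == k)] is Some t
                  then Some (lab t) else None).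

Lemma PP_cell t : PP (rowo t) (colo t) = Some (lab t).
Proof.
rewrite mxE; case: pickP => [t' /andP[/eqP h1 /eqP h2]|/(_ t)]; last by rewrite !eqxx.
by rewrite (inj_cell _ _ h1 h2).
Qed.

Lemma PP_some j k s : PP j k = Some s -> exists t, [/\ rowo t = j, colo t = k & lab t = s].
Proof.
rewrite mxE; case: pickP => [t /andP[/eqP h1 /eqP h2] [<-]|//].
by exists t.
Qed.

Lemma lab_inj t1 t2 : lab t1 = lab t2 -> t1.1 = t2.1.
Proof. by move=> /(congr1 val) /= /val_inj /enum_rank_inj. Qed.

Definition xk (k : 'I_v) (es : Et * Sg) : 'I_v :=
  Ordinal (ltn_pmod (k + (v - bb es.1 es.2 %% v)) vpos).

Lemma col_count k : #|[set j | PP j k == None]| = v - (2 * m) ^ n.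
Proof.
rewrite cardsCs card_ord; congr (_ - _).
have -> : ~: [set j | PP j k == None] = rowo @: [set t | colo t == k].
  apply/setP => j; rewrite !inE; apply/idP/imsetP.
  - case E: (PP j k) => [s|] // _.
    have [t [h1 h2 _]] := PP_some _ _ _ E.
    by exists t; rewrite ?inE ?h2 ?h1.
  - by case=> t; rewrite inE => /eqP h2 ->; rewrite -h2 PP_cell.
rewrite card_in_imset; last first.
  move=> t1 t2; rewrite !inE => /eqP h1 /eqP h2 hr.
  by apply: inj_cell _ _ hr _; rewrite h1 h2.
have -> : [set t | colo t == k] = (fun es : Et * Sg => (xk k es, es.1, es.2)) @: setT.
  apply/setP => -[[x e] s]; rewrite !inE; apply/eqP/imsetP.
  - move=> /(congr1 val) /= h; exists (e, s) => //.
    have hx : x = xk k (e, s) by apply: val_inj => /=; apply: modfix. 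
    by rewrite -hx.
  - case=> -[e' s'] _ [-> -> ->]; apply: val_inj => /=.
    exact: modfix2.
rewrite card_imset; last by move=> [e1 s1] [e2 s2] [] _ -> ->.
by rewrite cardsT card_prod !card_ffun !card_ord card_bool expnMn mulnC.
Qed.

Lemma PP_is_PDA : @is_PDA v v (v - (2 * m) ^ n) (m ^ n * v) PP.
Proof.
split; first exact: col_count.
split.
  move=> s.
  pose t : Tt := (enum_val (cast_ord (esym card_Tv) s), [ffun _ => true]).
  exists (rowo t), (colo t); rewrite PP_cell; congr Some.
  by rewrite /lab /= enum_valK; apply: val_inj.
move=> j1 j2 k1 k2 s hne /PP_some [t1 [h11 h12 hl1]] /PP_some [t2 [h21 h22 hl2]].
have := lab_inj _ _ (etrans hl1 (esym hl2)).
case: t1 h11 h12 hl1 => [[x e] s1]; case: t2 h21 h22 hl2 => [[x' e'] s2] /=.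
move=> h21 h22 _ h11 h12 _ [ex ee]; subst x' e'.
have hs : s1 != s2.
  by apply/eqP => hs; subst s2; apply: hne; rewrite -h11 -h12 -h21 -h22.
split.
- by move=> hj; move: (rows_diff x e _ _ hs); rewrite h11 h21 hj eqxx.
- by move=> hk; move: (cols_diff x e _ _ hs); rewrite h12 h22 hk eqxx.
- case E: (PP j1 k2) => [s'|] //.
  have [t' [ha hb _]] := PP_some _ _ _ E.
  by case: (cross_none _ _ _ _ _ hs (etrans ha (esym h11)) (etrans hb (esym h22))).
- case E: (PP j2 k1) => [s'|] //.
  have hs' : s2 != s1 by rewrite eq_sym.
  have [t' [ha hb _]] := PP_some _ _ _ E.
  by case: (cross_none _ _ _ _ _ hs' (etrans ha (esym h21)) (etrans hb (esym h12))).
Qed.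

End Constr.

Section Scheme.
Variables (K F Z S N : nat) (P : 'M[option 'I_S]_(F, K)).
Hypothesis hP : @is_PDA K F Z S P.

Definition sch : caching_scheme K N F := @CachingScheme K N F
  (fun k => [set p : 'I_N * 'I_F | P p.2 k == None])
  (fun d => [seq [set p : 'I_N * 'I_F | [exists k', (P p.2 k' == Some s) && (d k' == p.1)]]
            | s <- enum 'I_S]).

Lemma sch_cache k : #|cache sch k| = N * Z.
Proof.
have -> : cache sch k = setX [set: 'I_N] [set j | P j k == None].
  by apply/setP => -[i j]; rewrite !inE.
by rewrite cardsX cardsT card_ord (hP.1 k).
Qed.

Lemma sch_size d : size (deliver sch d) = S.
Proof. by rewrite /= size_map size_enum_ord. Qed.

Lemma sch_dec : decodable sch.
Proof.
move=> d k W W' hc hm j.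
case E: (P j k) => [s|]; last by apply: hc; rewrite inE E.
set A := [set p : 'I_N * 'I_F | [exists k', (P p.2 k' == Some s) && (d k' == p.1)]].
have hA : A \in deliver sch d by apply: map_f; rewrite mem_enum.
have hin : (d k, j) \in A by rewrite inE; apply/existsP; exists k; rewrite E !eqxx.
have := hm A hA; rewrite /xor_msg (bigD1 (d k, j) hin) [in RHS](bigD1 (d k, j) hin) /=.
have -> : \big[addb/false]_(p in A | p != (d k, j)) W p =
          \big[addb/false]_(p in A | p != (d k, j)) W' p.
  apply: eq_bigr => -[i j'] /andP [pA pne]; apply: hc; rewrite inE /=.
  move: pA; rewrite inE => /existsP [k' /andP [/eqP hk' /eqP hd]].
  have hne : (j, k) <> (j', k').
    move=> [hj hk]; subst j' k'; move: pne; rewrite /= hd.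
    by rewrite eqxx.
  by have [_ _ _ ->] := hP.2.2 j j' k k' s hne E hk'.
exact: addIb.
Qed.

End Scheme.

Local Open Scope ring_scope.
Lemma bound (R : realType) n v (q:R): q^+n = v%:R -> 3 <= q ->
  ((2 * `|Num.floor ((q-1)/2)|%N + 1)^n <= v)%N.
Proof.
move=> hq h3.
set x := (q-1)/2.
have x0 : 0 <= x by rewrite /x; lra.
have fx : (`|Num.floor x|%N)%:R <= x.
  by rewrite natr_absz ger0_norm ?floor_ge0 //; exact: floor_le.
rewrite -(ler_nat R) natrX.
have h2 : ((2 * `|Num.floor x|%N + 1)%N%:R : R) <= q.
  rewrite natrD natrM /x; rewrite /x in fx; lra.
rewrite -hq; apply: lerXn2r => //; rewrite ?nnegrE //; lra.
Qed.

Local Open Scope ring_scope.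

Theorem theorem3 (R : realType) (n v : nat) (q : R) :
  (0 < n)%N -> (0 < v)%N -> odd v ->
  (0 <= q)%R -> (q ^+ n = v%:R)%R -> (3 <= q)%R ->
  let m : nat := `|Num.floor ((q - 1) / 2)|%N in
  (exists P : 'M[option 'I_(m ^ n * v)]_(v, v),
      @is_PDA v v (v - (2 * m) ^ n) (m ^ n * v) P) /\
  (forall N : nat, (0 < N)%N ->
     exists sch : caching_scheme v N v,
       [/\ decodable sch,
           respects_memory_ratio sch
             (1 - (2 ^ n * m ^ n)%:R / q ^+ n : R)%R
         & load R sch = (m ^ n)%:R]).
Proof.
move=> n0 vpos vodd q0 hq h3 m.
have hu : ((2 * m + 1) ^ n <= v)%N := @bound R n v q hq h3.
have hPDA := @PP_is_PDA n m v vpos hu.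
split; first by eexists; exact: hPDA.
move=> N N0.
exists (@sch v v (m ^ n * v) N (PP n m v vpos)); split.
- exact: (@sch_dec _ _ _ _ N _ hPDA).
- move=> k; rewrite (@sch_cache _ _ _ _ N _ hPDA) hq.
  have h2 : ((2 * m) ^ n <= v)%N.
    by apply: leq_trans hu; rewrite leq_exp2r // addn1.
  have v0' : (v%:R : R) != 0 by rewrite pnatr_eq0 -lt0n.
  rewrite natrM natrB // -expnMn le_eqVlt; apply/orP; left; apply/eqP.
  by field.
- rewrite /load.
  have -> : (\max_(d : {ffun 'I_v -> 'I_N}) size (deliver (@sch v v (m ^ n * v) N (PP n m v vpos)) d) = m ^ n * v)%N.
    under eq_bigr => d _ do rewrite sch_size.
    apply/eqP; rewrite eqn_leq; apply/andP; split.
      by apply/bigmax_leqP.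
    exact: (leq_bigmax (F := fun _ => (m ^ n * v)%N) [ffun _ => Ordinal N0]).
  have v0' : (v%:R : R) != 0 by rewrite pnatr_eq0 -lt0n.
  by rewrite natrM mulfK.
Qed.
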